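(* Let $(\mathcal{A},\tau,\tau',t)$ be a real infinitesimal probability space in which both $\tau$ and $\tau'$ are tracial, i.e. $\tau(ab)=\tau(ba)$ and $\tau'(ab)=\tau'(ba)$ for all $a,b\in\mathcal{A}$. Let $\mathcal{A}_1,\dots,\mathcal{A}_s\subseteq\mathcal{A}$ be unital symmetric subalgebras which are free with respect to $\tau$. Then $\mathcal{A}_1,\dots,\mathcal{A}_s$ are real infinitesimally free if and only if, for every $n\ge 1$ and all centred, cyclically alternating $a_1,\dots,a_n\in\mathcal{A}_1\cup\dots\cup\mathcal{A}_s$, the following hold: (i) if $n=2$ or $n$ is odd, then $\tau'(a_1\cdots a_n)=0$; (ii) if $n=2k\ge 4$ is even, then $\tau'(a_1\cdots a_n)=\tau(a_1a_{k+1}^t)\,\tau(a_2a_{k+2}^t)\cdots\tau(a_ka_n^t)$.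
   Context: A real infinitesimal probability space $(\mathcal{A},\tau,\tau',t)$ consists of a unital complex algebra $\mathcal{A}$, an involution $t$ written $a\mapsto a^t$ (linear, with $(ab)^t=b^ta^t$ and $(a^t)^t=a$), a linear functional $\tau:\mathcal{A}\to\mathbb{C}$ with $\tau(1)=1$ and $\tau(a^t)=\tau(a)$ for all $a$, and a linear functional $\tau':\mathcal{A}\to\mathbb{C}$ with $\tau'(1)=0$. A subalgebra $\mathcal{B}$ is symmetric if $b^t\in\mathcal{B}$ whenever $b\in\mathcal{B}$. Elements $a_1,\dots,a_n$ with $a_i\in\mathcal{A}_{j_i}$ are centred if $\tau(a_i)=0$ for all $i$; they are alternating if $j_1\ne j_2,\dots,j_{n-1}\ne j_n$, and cyclically alternating if in addition $j_n\ne j_1$. Unital symmetric subalgebras $\mathcal{A}_1,\dots,\mathcal{A}_s$ are real infinitesimally free if, whenever $a_1,\dots,a_n$ with $a_i\in\mathcal{A}_{j_i}$ are centred and alternating, we have: (1) $\tau(a_1\cdots a_n)=0$; (2) if $n=2$, $\tau'(a_1a_2)=0$; (3) if $n=2k-1\ge 3$, $\tau'(a_1\cdots a_n)=\tau(a_1a_n)\tau'(a_2\cdots a_{n-1})+\tau(a_1a_k^ta_n)\tau(a_2a_{k+1}^t)\cdots\tau(a_{k-1}a_{n-1}^t)$; (4) if $n=2k\ge4$, $\tau'(a_1\cdots a_n)=\tau(a_1a_n)\tau'(a_2\cdots a_{n-1})+\tau(a_1a_{k+1}^t)\tau(a_2a_{k+2}^t)\cdots\tau(a_ka_n^t)$.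 *)

(* Defs.v *)
(* Complex numbers are modelled as R[i] (mathcomp-real-closed
   `complex`) for an arbitrary realType R (any realType is the real line). *)
From mathcomp Require Import all_boot all_algebra.
From mathcomp Require Export complex.
From mathcomp Require Export reals.
Set Implicit Arguments.
Unset Strict Implicit.
Unset Printing Implicit Defensive.
Import GRing.Theory.
Local Open Scope ring_scope.

Section Defs.
Variable (R : realType).
Local Notation C := (R[i]).
Variable (A : algType C).

Definition is_transpose (t : A -> A) : Prop :=
  [/\ (forall (c : C) (a b : A), t (c *: a + b) = c *: t a + t b),
      (forall a b : A, t (a * b) = t b * t a) &
      (forall a : A, t (t a) = a)].

Definition is_lin_functional (f : A -> C) : Prop :=
  forall (c : C) (a b : A), f (c *: a + b) = c * f a + f b.

Definition real_inf_prob_space (tau tau' : A -> C) (t : A -> A) : Prop :=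
  [/\ is_transpose t, is_lin_functional tau, is_lin_functional tau' &
      [/\ tau 1 = 1, (forall a, tau (t a) = tau a) & tau' 1 = 0]].

Definition tracial (f : A -> C) : Prop := forall a b : A, f (a * b) = f (b * a).

Definition unital_subalgebra (B : pred A) : Prop :=
  [/\ 1 \in B,
      (forall (c : C) x y, x \in B -> y \in B -> c *: x + y \in B) &
      (forall x y, x \in B -> y \in B -> x * y \in B)].

Definition symmetric_subalgebra (t : A -> A) (B : pred A) : Prop :=
  forall b, b \in B -> t b \in B.

(* Sequences a_1..a_n are encoded 0-based: a : nat -> A, a i for i < n,
   with colouring j : nat -> 'I_s giving a i \in Asub (j i). *)
Definition in_subalgs (s : nat) (Asub : 'I_s -> pred A) (n : nat)
  (a : nat -> A) (j : nat -> 'I_s) : Prop :=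
  forall i, (i < n)%N -> a i \in Asub (j i).

Definition centred (tau : A -> C) (n : nat) (a : nat -> A) : Prop :=
  forall i, (i < n)%N -> tau (a i) = 0.

Definition alternating (s : nat) (n : nat) (j : nat -> 'I_s) : Prop :=
  forall i, (i.+1 < n)%N -> j i != j i.+1.

Definition cyc_alternating (s : nat) (n : nat) (j : nat -> 'I_s) : Prop :=
  alternating n j /\ ((0 < n)%N -> j n.-1 != j 0%N).

(* a_1 a_2 ... a_n (0-based: a 0 * ... * a (n-1)) *)
Definition word (n : nat) (a : nat -> A) : A := \prod_(0 <= i < n) a i.

(* a_2 ... a_{n-1} (0-based: a 1 * ... * a (n-2)) *)
Definition inner_word (n : nat) (a : nat -> A) : A :=
  \prod_(1 <= i < n.-1) a i.

Definition free_wrt (tau : A -> C) (s : nat) (Asub : 'I_s -> pred A) : Prop :=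
  forall (n : nat) (a : nat -> A) (j : nat -> 'I_s),
    (1 <= n)%N -> in_subalgs Asub n a j -> centred tau n a -> alternating n j ->
    tau (word n a) = 0.

Definition real_inf_free (tau tau' : A -> C) (t : A -> A)
    (s : nat) (Asub : 'I_s -> pred A) : Prop :=
  forall (n : nat) (a : nat -> A) (j : nat -> 'I_s),
    (1 <= n)%N -> in_subalgs Asub n a j -> centred tau n a -> alternating n j ->
    [/\ tau (word n a) = 0,
        (n = 2%N -> tau' (word n a) = 0),
        (forall k, n = (2 * k - 1)%N -> (3 <= n)%N ->
           tau' (word n a) =
             tau (a 0%N * a n.-1) * tau' (inner_word n a)
             + tau (a 0%N * t (a k.-1) * a n.-1)
               * \prod_(1 <= i < k.-1) tau (a i * t (a (i + k.-1)%N))) &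
        (forall k, n = (2 * k)%N -> (4 <= n)%N ->
           tau' (word n a) =
             tau (a 0%N * a n.-1) * tau' (inner_word n a)
             + \prod_(0 <= i < k) tau (a i * t (a (i + k)%N)))].

End Defs.

(* Main.v *)
Require Import Defs.
From mathcomp Require Import all_boot all_algebra.
From mathcomp Require Import complex reals.
From mathcomp Require Import zify.
Import GRing.Theory.
Local Open Scope ring_scope.

Theorem proposition3p4 (R : realType) (A : algType R[i])
    (tau tau' : A -> R[i]) (t : A -> A)
    (s : nat) (Asub : 'I_s -> pred A) :
  real_inf_prob_space tau tau' t ->
  tracial tau -> tracial tau' ->
  (forall l, unital_subalgebra (Asub l)) ->
  (forall l, symmetric_subalgebra t (Asub l)) ->
  free_wrt tau Asub ->
  real_inf_free tau tau' t Asub <->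
  (forall (n : nat) (a : nat -> A) (j : nat -> 'I_s),
     (1 <= n)%N -> in_subalgs Asub n a j -> centred tau n a ->
     cyc_alternating n j ->
     ((n = 2%N \/ odd n) -> tau' (word n a) = 0) /\
     (forall k, n = (2 * k)%N -> (4 <= n)%N ->
        tau' (word n a) = \prod_(0 <= i < k) tau (a i * t (a (i + k)%N)))).
Proof.
move=> [[tD tM tt] taulin tau'lin [tau1 taut tau'1]] trT trT' sub symm free.
have lin0 : forall f : A -> R[i], is_lin_functional f -> f 0 = 0.
  move=> f hf; have h := hf 1 0 0; rewrite scale1r addr0 mul1r in h.
  by apply: (addrI (f 0)); rewrite addr0 -h.
have linD : forall f : A -> R[i], is_lin_functional f -> forall x y, f (x + y) = f x + f y.
  by move=> f hf x y; rewrite -(scale1r x) hf mul1r scale1r.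
have linZ : forall f : A -> R[i], is_lin_functional f -> forall c x, f (c *: x) = c * f x.
  by move=> f hf c x; rewrite -(addr0 (c *: x)) hf lin0 // addr0.
have linB : forall f : A -> R[i], is_lin_functional f -> forall x y, f (x - y) = f x - f y.
  by move=> f hf x y; rewrite -scaleN1r linD // linZ // mulN1r.
have sub0 l : 0 \in Asub l.
  case: (sub l) => h1 hl _; have := hl (-1) 1 1 h1 h1; by rewrite scaleN1r addNr.
have subZ l c x : x \in Asub l -> c *: x \in Asub l.
  case: (sub l) => h1 hl _ hx; have := hl c x 0 hx (sub0 l); by rewrite addr0.
have subD l x y : x \in Asub l -> y \in Asub l -> x + y \in Asub l.
  case: (sub l) => h1 hl _ hx hy; have := hl 1 x y hx hy; by rewrite scale1r.
have subM l x y : x \in Asub l -> y \in Asub l -> x * y \in Asub l.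
  by case: (sub l) => _ _ hm; apply: hm.
pose cen x := x - tau x *: 1.
have subcen l x : x \in Asub l -> cen x \in Asub l.
  move=> hx; rewrite /cen -scaleN1r; apply: (subD) => //; apply: (subZ); apply: (subZ).
  by case: (sub l).
have taucen x : tau (cen x) = 0.
  by rewrite /cen linB // linZ // tau1 mulr1 subrr.
have cenM x y : cen x * y = x * y - tau x *: y.
  by rewrite /cen mulrBl -scalerAl mul1r.
have free2 : forall p q x y, p != q -> x \in Asub p -> y \in Asub q ->
    tau x = 0 -> tau y = 0 -> tau (x * y) = 0.
  move=> p q x y hpq hx hy tx ty.
  have := free 2%N (fun i => if i == 0%N then x else y) (fun i => if i == 0%N then p else q).
  rewrite /word big_ltn // big_ltn // big_geq // mulr1 /=; apply => //.
  - by case=> [|[|]].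
  - by case=> [|[|]].
  - by case=> [|[|]].
have free2l : forall p q x y, p != q -> x \in Asub p -> y \in Asub q ->
    tau y = 0 -> tau (x * y) = 0.
  move=> p q x y hpq hx hy ty.
  have -> : x * y = cen x * y + tau x *: y by rewrite cenM subrK.
  by rewrite linD // linZ // ty mulr0 addr0 (free2 p q (cen x) y hpq (subcen p x hx) hy (taucen x) ty).
have free2r : forall p q x y, p != q -> x \in Asub p -> y \in Asub q ->
    tau x = 0 -> tau (x * y) = 0.
  move=> p q x y hpq hx hy tx; rewrite trT; apply: ((free2l) q p) => //.
  by rewrite eq_sym.
have triple : forall p q r x y z, p != r -> x \in Asub p -> y \in Asub q ->
    z \in Asub r -> tau x = 0 -> tau y = 0 -> tau z = 0 -> tau (x * y * z) = 0.
  move=> p q r x y z hpr hx hy hz tx ty tz.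
  case: (eqVneq q p) => [eqp|hqp].
    by apply: ((free2l) p r) => //; apply: (subM) => //; rewrite -eqp.
  case: (eqVneq q r) => [eqr|hqr].
    by rewrite -mulrA; apply: ((free2r) p r) => //; apply: (subM) => //; rewrite -eqr.
  have := free 3%N (fun i => nth 0 [:: x; y; z] i) (fun i => nth p [:: p; q; r] i).
  rewrite /word big_ltn // big_ltn // big_ltn // big_geq // mulr1 /= mulrA; apply => //.
  - by case=> [|[|[|]]].
  - by case=> [|[|[|]]].
  - by case=> [|[|[|]]] //= _; rewrite ?hqr // eq_sym.
have wsplit : forall (n : nat) (a : nat -> A), (2 <= n)%N -> word n a = a 0%N * inner_word n a * a n.-1.
  move=> n a; case: n => [|[|m]] // _.
  by rewrite /word /inner_word big_ltn // big_nat_recr //= mulrA.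
have zz : forall (n : nat) (a : nat -> A) (j : nat -> 'I_s), (1 <= n)%N ->
    in_subalgs Asub n a j -> centred tau n a -> j n.-1 != j 0%N ->
    tau (a 0%N * a n.-1) = 0 /\
    (forall m, (m < n)%N -> tau (a 0%N * t (a m) * a n.-1) = 0).
  move=> n a j n1 hin hcen hj.
  have hn' : (n.-1 < n)%N by lia.
  split.
    apply: (free2 (j 0%N) (j n.-1) _ _ _ (hin _ n1) (hin _ hn') (hcen _ n1) (hcen _ hn')).
    by rewrite eq_sym.
  move=> m hm.
  apply: (triple (j 0%N) (j m) (j n.-1) _ _ _ _ (hin _ n1) (symm _ _ (hin _ hm))
     (hin _ hn') (hcen _ n1) _ (hcen _ hn')).
    by rewrite eq_sym.
  by rewrite taut; apply: hcen.
split.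
- move=> H n a j n1 hin hcen [halt hcyc].
  have hj0 : j n.-1 != j 0%N by apply: hcyc.
  have [_ h2 hodd heven] := H n a j n1 hin hcen halt.
  have [z1 z3] := zz n a j n1 hin hcen hj0.
  split.
  + case=> [n2|on]; first exact: h2.
    have ne1 : n <> 1%N by move=> e; move: hj0; rewrite e eqxx.
    have e : n = (n %/ 2 * 2 + 1)%N by rewrite {1}(divn_eq n 2) modn2 on.
    have n3 : (3 <= n)%N by lia.
    have nk : n = (2 * (n %/ 2).+1 - 1)%N by lia.
    rewrite (hodd _ nk n3) z1 mul0r add0r z3 ?mul0r //; lia.
  + by move=> k nk n4; rewrite (heven k nk n4) z1 mul0r add0r.
- move=> H n a j n1 hin hcen halt.
  pose c := fun i => if i == 0%N then cen (a n.-1 * a 0%N) else a i.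
  have key : (2 <= n)%N -> tau' (word n a) =
      tau' (word n.-1 c) + tau (a 0%N * a n.-1) * tau' (inner_word n a).
    move=> n2; rewrite wsplit // trT' mulrA.
    have -> : word n.-1 c = cen (a n.-1 * a 0%N) * inner_word n a.
      rewrite /word /inner_word big_ltn; last by lia.
      rewrite {1}/c /=; congr (_ * _); apply: eq_big_nat => i /andP [hi _].
      by rewrite /c; case: eqP => // ?; lia.
    by rewrite cenM linB // linZ // (trT (a 0%N)) subrK.
  have hcj : j n.-1 = j 0%N -> (2 <= n)%N ->
      [/\ in_subalgs Asub n.-1 c j, centred tau n.-1 c & cyc_alternating n.-1 j].
    move=> hc n2; split.
    - move=> i hi; rewrite /c; case: eqP => [->|_].
        apply: (subcen); apply: (subM); [rewrite -hc|]; apply: hin; lia.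
      apply: hin; lia.
    - move=> i hi; rewrite /c; case: eqP => [_|_]; first exact: taucen.
      apply: hcen; lia.
    - split; first by move=> i hi; apply: halt; lia.
      move=> _; rewrite -hc; have := halt n.-2.
      have -> : n.-2.+1 = n.-1 by lia.
      apply; lia.
  split.
  + exact: (free n a j n1 hin hcen halt).
  + move=> n2.
    have hc : cyc_alternating n j.
      split => [i hi|_]; first by apply: halt.
      rewrite n2 eq_sym; apply: (halt 0%N); rewrite n2.
      done.
    have [h _] := H n a j n1 hin hcen hc; exact: h (or_introl n2).
  + move=> k nk n3.
    case: (eqVneq (j n.-1) (j 0%N)) => hc.
    * have [ci cc ca] := hcj hc ltac:(lia).
      rewrite key; last lia.
      have [hk2|hk3] : k = 2%N \/ (3 <= k)%N by lia.
      - have [h _] := H n.-1 c j ltac:(lia) ci cc ca.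
        rewrite h; last by left; lia.
        rewrite add0r hk2 big_geq // mulr1 /=.
        have -> : tau (a 0%N * t (a 1%N) * a n.-1) = 0.
          rewrite trT mulrA.
          apply: (free2l (j 0%N) (j 1%N)).
          + apply: (halt 0%N); lia.
          + apply: (subM); [rewrite -hc|]; apply: hin; lia.
          + apply: symm; apply: hin; lia.
          + rewrite taut; apply: hcen; lia.
        by rewrite addr0.
      - have [_ h] := H n.-1 c j ltac:(lia) ci cc ca.
        rewrite (h k.-1); [|lia|lia].
        rewrite big_ltn; last lia.
        rewrite addrC; congr (_ + _); congr (_ * _).
        + rewrite /c /= add0n; case: eqP => [?|_]; first lia.
          rewrite cenM linB // linZ // taut hcen; last lia.
          by rewrite mulr0 subr0 [RHS]trT mulrA.
        + apply: eq_big_nat => i /andP [hi _].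
          rewrite /c; case: eqP => [?|_]; first lia.
          by case: eqP => [?|_] //; lia.
    * have ca : cyc_alternating n j by split.
      have [h _] := H n a j n1 hin hcen ca.
      have [z1 z3] := zz n a j n1 hin hcen hc.
      rewrite h; last first.
        right; rewrite nk; have -> : (2 * k - 1 = (2 * k.-1).+1)%N by lia.
        by rewrite /= oddM.
      by rewrite z1 z3 ?mul0r ?addr0 //; lia.
  + move=> k nk n4.
    case: (eqVneq (j n.-1) (j 0%N)) => hc.
    * have [ci cc ca] := hcj hc ltac:(lia).
      rewrite key; last lia.
      have [h _] := H n.-1 c j ltac:(lia) ci cc ca.
      rewrite h; last first.
        right; have -> : (n.-1 = (2 * k.-1).+1)%N by lia.
        by rewrite /= oddM.
      have [i0 hi0 hne] : exists2 i, (i < k)%N & j i != j (i + k)%N.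
        case: (eqVneq (j 0%N) (j k)) => h0; last by exists 0%N => //; lia.
        exists k.-1; first lia.
        have -> : (k.-1 + k = n.-1)%N by lia.
        rewrite hc h0; have := halt k.-1.
        have -> : k.-1.+1 = k by lia.
        apply; lia.
      have -> : \prod_(0 <= i < k) tau (a i * t (a (i + k)%N)) = 0.
        apply/eqP; rewrite prodf_seq_eq0; apply/hasP; exists i0.
          rewrite mem_index_iota; lia.
        apply/eqP; apply: (free2 (j i0) (j (i0 + k)%N)) => //.
        - apply: hin; lia.
        - apply: symm; apply: hin; lia.
        - apply: hcen; lia.
        - rewrite taut; apply: hcen; lia.
      by rewrite add0r addr0.
    * have ca : cyc_alternating n j by split.
      have [_ h] := H n a j n1 hin hcen ca.
      have [z1 _] := zz n a j n1 hin hcen hc.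
      by rewrite (h k nk n4) z1 mul0r add0r.
Qed.
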